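(* Let $q>0$ and $s>0$. For $n\in\mathbb{N}=\{1,2,3,\dots\}$ put \[ n_q:=\frac{\Gamma(nq+1)}{\Gamma((n-1)q+1)}, \] and put $0_q:=0$. Then the series \[ \sum_{n=0}^{\infty}e^{-s\,n_q} \] converges, i.e. $\sum_{n=0}^{\infty}e^{-s\,n_q}<\infty$.
   Context: $\Gamma$ denotes the Euler Gamma function, $\Gamma(z)=\int_0^\infty t^{z-1}e^{-t}\,dt$ for $\operatorname{Re} z>0$. The numbers $n_q$ are the eigenvalues of the operator $a^\dagger a$ on the Mittag-Leffler Fock space of the slitted plane. In that space the eigenvalue corresponding to $n=0$ is $0$. *)

(* Defs.v *)
From Stdlib Require Import Reals.
From Coquelicot Require Import Coquelicot.
Open Scope R_scope.

Definition Gamma (z : R) : R :=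
  RInt_gen (fun t => Rpower t (z - 1) * exp (- t))
           (at_right 0) (Rbar_locally p_infty).

Definition nq (q : R) (n : nat) : R :=
  match n with
  | O => 0
  | S m => Gamma (INR (S m) * q + 1) / Gamma (INR m * q + 1)
  end.

(* Main.v *)
Require Import Defs.
From Stdlib Require Import Reals.
From Coquelicot Require Import Coquelicot.
From Stdlib Require Import Lra Lia Classical.
Open Scope R_scope.


Definition g (p t : R) := Rpower t p * exp (- t).

Lemma gE p t : 0 < t -> g p t = exp (p * ln t - t).
Proof. intros. unfold g, Rpower. rewrite <- exp_plus. f_equal; ring. Qed.

Lemma g_pos p t : 0 < g p t.
Proof. unfold g, Rpower. apply Rmult_lt_0_compat; apply exp_pos. Qed.

Lemma g_cont p t : 0 < t -> continuous (g p) t.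
Proof.
  intros Ht. apply (@ex_derive_continuous R_AbsRing R_NormedModule). unfold g, Rpower.
  auto_derive. lra.
Qed.

Lemma g_ex p a b : 0 < a -> 0 < b -> ex_RInt (g p) a b.
Proof.
  intros Ha Hb. apply (@ex_RInt_continuous R_CompleteNormedModule). intros z Hz. apply g_cont.
  destruct Hz as [Hz _]. eapply Rlt_le_trans; [|exact Hz].
  unfold Rmin; destruct Rle_dec; lra.
Qed.

Lemma exp_le_exp x y : x <= y -> exp x <= exp y.
Proof. intros [H|H]. left; apply exp_increasing; auto. subst; lra. Qed.

Definition Kc p := Rabs ((p+1) * ln (2*(p+1)) - (p+1)).

Lemma ln_le_id y : 0 < y -> ln y <= y - 1.
Proof. intros. pose proof (exp_ineq1_le (ln y)). rewrite exp_ln in H0; lra. Qed.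

Lemma g_bound p t : 0 <= p -> 0 < t -> g p t <= exp (Kc p) * exp (- (t/2)).
Proof.
  intros Hp Ht. rewrite gE by lra. rewrite <- exp_plus. apply exp_le_exp.
  assert (p * ln t <= Kc p + t/2); [|lra].
  destruct (Rle_dec t 1).
  - assert (ln t <= 0). { destruct (Req_dec t 1). subst; rewrite ln_1; lra.
      left; rewrite <- ln_1; apply ln_increasing; lra. }
    pose proof (Rabs_pos ((p+1) * ln (2*(p+1)) - (p+1))). unfold Kc. nra.
  - assert (0 <= ln t). { left; rewrite <- ln_1; apply ln_increasing; lra. }
    assert (ln t = ln (2*(p+1)) + ln (t / (2*(p+1)))).
    { rewrite <- ln_mult. f_equal. field. lra. lra. apply Rdiv_lt_0_compat; lra. }
    pose proof (ln_le_id (t / (2*(p+1)))).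
    assert (0 < t / (2*(p+1))) by (apply Rdiv_lt_0_compat; lra).
    specialize (H1 H2).
    assert ((p+1) * ln t <= (p+1)*ln (2*(p+1)) + t/2 - (p+1)).
    { rewrite H0. assert ((p+1) * (t / (2*(p+1))) = t/2) by (field; lra). nra. }
    pose proof (Rle_abs ((p+1) * ln (2*(p+1)) - (p+1))). unfold Kc. nra.
Qed.

Lemma g_int_bound p a b : 0 <= p -> 0 < a <= b -> RInt (g p) a b <= 2 * exp (Kc p).
Proof.
  intros Hp [Ha Hab].
  set (F := fun t => - 2 * exp (Kc p) * exp (- (t/2))).
  assert (HI : is_RInt (fun t => exp (Kc p) * exp (- (t/2))) a b (minus (F b) (F a))).
  { apply (@is_RInt_derive R_CompleteNormedModule).
    - intros x _. unfold F. auto_derive. auto. unfold Rdiv. generalize (exp (- (x * / 2))) (exp (Kc p)); intros E1 E2; field.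
    - intros x _. apply (@ex_derive_continuous R_AbsRing R_NormedModule). auto_derive. auto. }
  apply Rle_trans with (minus (F b) (F a)).
  - apply (is_RInt_le (g p) (fun t => exp (Kc p) * exp (- (t/2))) a b); auto.
    + apply (@RInt_correct R_CompleteNormedModule), g_ex; lra.
    + intros x Hx. apply g_bound; lra.
  - unfold minus, plus, opp, F; simpl.
    pose proof (exp_pos (Kc p)). pose proof (exp_pos (- (b/2))).
    assert (exp (-(a/2)) <= 1). { rewrite <- exp_0. apply exp_le_exp. lra. }
    nra.
Qed.

Lemma RInt_ge0 p a b : 0 < a <= b -> 0 <= RInt (g p) a b.
Proof.
  intros. apply RInt_ge_0. lra. apply g_ex; lra. intros; left; apply g_pos.
Qed.

Lemma RInt_split p a b c : 0 < a -> 0 < b -> 0 < c ->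
  RInt (g p) a c = RInt (g p) a b + RInt (g p) b c.
Proof.
  intros. rewrite <- (RInt_Chasles (g p) a b c) by (apply g_ex; lra). reflexivity.
Qed.

Lemma RInt_mono p a a' b' b : 0 < a <= a' -> a' <= b' -> b' <= b ->
  RInt (g p) a' b' <= RInt (g p) a b.
Proof.
  intros. rewrite (RInt_split p a a' b) by lra. rewrite (RInt_split p a' b' b) by lra.
  pose proof (RInt_ge0 p a a'). pose proof (RInt_ge0 p b' b). lra.
Qed.

Definition Sset p v := exists a b, 0 < a <= b /\ v = RInt (g p) a b.

Lemma S_lub p : 0 <= p -> {l | is_lub (Sset p) l}.
Proof.
  intros Hp. apply completeness.
  - exists (2 * exp (Kc p)). intros v [a [b [Hab ->]]]. apply g_int_bound; lra.
  - exists (RInt (g p) 1 1). exists 1, 1. split; [lra|auto].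
Qed.

Lemma lub_gen p l : is_lub (Sset p) l ->
  is_RInt_gen (g p) (at_right 0) (Rbar_locally p_infty) l.
Proof.
  intros [Hub Hl].
  apply (filterlimi_lim_ext_loc (fun ab => RInt (g p) (fst ab) (snd ab))).
  - apply (Filter_prod _ _ _ (fun a => 0 < a) (fun b => 0 < b)).
    + exists (mkposreal 1 Rlt_0_1). intros; auto.
    + exists 0. intros; auto.
    + intros x y Hx Hy. simpl. apply (@RInt_correct R_CompleteNormedModule), g_ex; auto.
  - apply filterlim_locally. intros eps.
    assert (exists v, Sset p v /\ l - eps < v).
    { apply NNPP. intro Hn. assert (l <= l - eps); [|destruct eps; simpl in *; lra].
      apply Hl. intros v Hv. apply Rnot_lt_le. intro Hlt. apply Hn. exists v; auto. }
    destruct H as [v [[a0 [b0 [Hab0 ->]]] Hv]].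
    apply (Filter_prod _ _ _ (fun a => 0 < a < a0) (fun b => b0 < b)).
    + exists (mkposreal a0 (proj1 Hab0)). intros y Hy Hy0. split; auto.
      unfold ball in Hy; simpl in Hy; unfold AbsRing_ball, abs, minus, plus, opp in Hy; simpl in Hy.
      apply Rabs_def2 in Hy. lra.
    + exists b0. auto.
    + intros x y Hx Hy. simpl.
      assert (RInt (g p) x y <= l). { apply Hub. exists x, y. split; auto; lra. }
      assert (RInt (g p) a0 b0 <= RInt (g p) x y). { apply RInt_mono; lra. }
      unfold ball; simpl; unfold AbsRing_ball, abs, minus, plus, opp; simpl.
      apply Rabs_def1; destruct eps; simpl in *; lra.
Qed.

Lemma Gamma_lub z : 1 <= z -> is_lub (Sset (z-1)) (Gamma z).
Proof.
  intros Hz. destruct (S_lub (z-1)) as [l Hl]. lra.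
  replace (Gamma z) with l; auto. symmetry.
  unfold Gamma. apply (is_RInt_gen_unique (g (z-1))). apply lub_gen; auto.
Qed.

Lemma Gamma_ge z a b : 1 <= z -> 0 < a <= b -> RInt (g (z-1)) a b <= Gamma z.
Proof. intros. apply (Gamma_lub z H). exists a, b; auto. Qed.

Lemma Gamma_le z M : 1 <= z -> (forall a b, 0 < a <= b -> RInt (g (z-1)) a b <= M) ->
  Gamma z <= M.
Proof. intros. apply (Gamma_lub z H). intros v [a [b [Hab ->]]]. auto. Qed.

Lemma Gamma_pos z : 1 <= z -> 0 < Gamma z.
Proof.
  intros Hz. eapply Rlt_le_trans; [|apply (Gamma_ge z 1 2); lra].
  eapply Rlt_le_trans with (RInt (fun _ => exp (-2)) 1 2).
  - rewrite RInt_const. unfold scal; simpl; unfold mult; simpl.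
    pose proof (exp_pos (-2)). lra.
  - apply RInt_le. lra. apply ex_RInt_const. apply g_ex; lra.
    intros x Hx. rewrite gE by lra. apply exp_le_exp.
    assert (0 <= ln x) by (left; rewrite <- ln_1; apply ln_increasing; lra).
    nra.
Qed.

Lemma shift_pt A x : 0 < x < A -> g (2*A) x <= g (2*A) (x + A).
Proof.
  intros Hx. rewrite !gE by lra. apply exp_le_exp.
  assert (ln (2*x) <= ln (x + A)) by (apply ln_le; lra).
  rewrite ln_mult in H by lra. pose proof ln_lt_2.
  assert (0 < A*(ln 2 - /2)) by (apply Rmult_lt_0_compat; lra).
  assert (A <= 2*A*ln 2) by lra.
  assert (2*A*(ln 2 + ln x) <= 2*A*ln (x+A)) by (apply Rmult_le_compat_l; lra).
  lra.
Qed.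
Lemma shift_int A a : 0 < a < A ->
  RInt (g (2*A)) a A <= RInt (g (2*A)) (a + A) (2*A).
Proof.
  intros Ha.
  assert (E := RInt_comp_lin (g (2*A)) 1 A a A).
  replace (1 * a + A) with (a + A) in E by ring.
  replace (1 * A + A) with (2 * A) in E by ring.
  rewrite <- E by (apply g_ex; lra).
  apply (RInt_le (g (2*A)) (fun y => scal 1 (g (2 * A) (1 * y + A)))). lra. apply g_ex; lra.
  apply (@ex_RInt_comp_lin R_CompleteNormedModule). replace (1 * a + A) with (a + A) by ring.
  replace (1 * A + A) with (2 * A) by ring. apply g_ex; lra.
  intros x Hx. unfold scal; simpl; unfold mult; simpl; rewrite Rmult_1_l. replace (1 * x + A) with (x + A) by ring.
  apply shift_pt; lra.
Qed.

Lemma mult_pt A q p x : 0 < A -> 0 <= q -> A <= x ->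
  Rpower A q * g p x <= g (p + q) x.
Proof.
  intros. unfold g. rewrite Rpower_plus.
  assert (Rpower A q <= Rpower x q) by (apply Rle_Rpower_l; lra).
  assert (0 < Rpower x p * exp (-x)) by (unfold Rpower; apply Rmult_lt_0_compat; apply exp_pos).
  replace (Rpower x p * Rpower x q * exp (-x)) with (Rpower x q * (Rpower x p * exp (-x))) by ring.
  apply Rmult_le_compat_r; lra.
Qed.

Lemma key A q : 0 < A -> 0 < q ->
  Gamma (2*A + 1) * Rpower A q <= 2 * Gamma (2*A + q + 1).
Proof.
  intros HA Hq.
  assert (HPA : 0 < Rpower A q) by (unfold Rpower; apply exp_pos).
  assert (Gamma (2*A+1) <= 2 * Gamma (2*A + q + 1) / Rpower A q); [|
    apply (Rmult_le_compat_r (Rpower A q)) in H; [|lra];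
    unfold Rdiv in H; rewrite Rmult_assoc, Rinv_l in H; lra].
  apply Gamma_le. lra. intros a b Hab.
  replace (2*A+1-1) with (2*A) by ring.
  set (B := Rmax b (2*A)).
  assert (HbB : b <= B) by (unfold B; apply Rmax_l).
  assert (HAB : 2*A <= B) by (unfold B; apply Rmax_r).
  assert (H1 : RInt (g (2*A)) a b <= RInt (g (2*A)) a B) by (apply RInt_mono; lra).
  assert (H2 : RInt (g (2*A)) a B <= 2 * RInt (g (2*A)) A B).
  { pose proof (RInt_ge0 (2*A) A B).
    destruct (Rle_dec A a).
    - assert (RInt (g (2*A)) a B <= RInt (g (2*A)) A B) by (apply RInt_mono; lra). lra.
    - rewrite (RInt_split _ a A B) by lra.
      pose proof (shift_int A a).
      assert (RInt (g (2*A)) (a+A) (2*A) <= RInt (g (2*A)) A B) by (apply RInt_mono; lra).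
      lra. }
  assert (H3 : Rpower A q * RInt (g (2*A)) A B <= RInt (g (2*A+q)) A B).
  { replace (Rpower A q * RInt (g (2*A)) A B) with
      (RInt (fun x => scal (Rpower A q) (g (2*A) x)) A B).
    2:{ rewrite (@RInt_scal R_CompleteNormedModule). reflexivity. apply g_ex; lra. }
    apply (RInt_le (fun x => scal (Rpower A q) (g (2*A) x)) (g (2*A+q))). lra.
    apply (@ex_RInt_scal R_CompleteNormedModule), g_ex; lra. apply g_ex; lra.
    intros x Hx. apply mult_pt; lra. }
  assert (H4 : RInt (g (2*A+q)) A B <= Gamma (2*A+q+1)).
  { replace (2*A+q) with (2*A+q+1-1) at 1 by ring. apply Gamma_ge; lra. }
  apply (Rmult_le_reg_l (Rpower A q)); auto.
  replace (Rpower A q * (2 * Gamma (2 * A + q + 1) / Rpower A q)) with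
    (2 * Gamma (2 * A + q + 1)) by (field; lra).
  assert (Rpower A q * RInt (g (2*A)) a b <= Rpower A q * (2 * RInt (g (2*A)) A B))
    by (apply Rmult_le_compat_l; lra).
  lra.
Qed.

Definition tel (k : nat) := / INR (S k) - / INR (S (S k)).

Lemma tel_sum N : sum_f_R0 tel N = 1 - / INR (S (S N)).
Proof.
  induction N.
  - simpl. unfold tel. simpl. field.
  - simpl sum_f_R0. rewrite IHN. unfold tel. ring.
Qed.

Lemma tel_ex : ex_series tel.
Proof.
  apply ex_series_Reals_1. exists 1. apply is_lim_seq_Reals.
  apply is_lim_seq_ext with (fun N => 1 - / INR (N + 2)).
  { intros n. rewrite tel_sum. f_equal. f_equal. f_equal. lia. }
  assert (Hinv : is_lim_seq (fun n => / INR (n + 2)) 0).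
  { apply (is_lim_seq_incr_n (fun n => / INR n) 2 0).
    replace (Finite 0) with (Rbar_inv p_infty) by reflexivity.
    apply is_lim_seq_inv. apply is_lim_seq_INR. discriminate. }
  assert (H := is_lim_seq_minus' (fun _ => 1) (fun n => / INR (n+2)) 1 0 (is_lim_seq_const 1) Hinv).
  rewrite Rminus_0_r in H. exact H.
Qed.

Lemma nq_bound q k : 0 < q ->
  Rpower (INR (S k) * q / 2) q / 2 <= nq q (S (S k)).
Proof.
  intros Hq. unfold nq.
  set (A := INR (S k) * q / 2).
  assert (HA : 0 < A). { unfold A. pose proof (lt_0_INR (S k) ltac:(lia)). nra. }
  pose proof (key A q HA Hq) as H.
  replace (2 * A + 1) with (INR (S k) * q + 1) in H by (unfold A; field).
  replace (2 * A + q + 1) with (INR (S (S k)) * q + 1) in H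
    by (unfold A; rewrite (S_INR (S k)); field).
  assert (HG := Gamma_pos (INR (S k) * q + 1)).
  assert (0 <= INR (S k) * q) by (apply Rmult_le_pos; [apply pos_INR|lra]).
  specialize (HG ltac:(lra)).
  apply (Rmult_le_reg_r (2 * Gamma (INR (S k) * q + 1))). lra.
  replace (Rpower A q / 2 * (2 * Gamma (INR (S k) * q + 1)))
    with (Gamma (INR (S k) * q + 1) * Rpower A q) by (field).
  replace (Gamma (INR (S (S k)) * q + 1) / Gamma (INR (S k) * q + 1) * (2 * Gamma (INR (S k) * q + 1)))
    with (2 * Gamma (INR (S (S k)) * q + 1)) by (field; lra).
  exact H.
Qed.

Lemma sq_bound m q b : 0 < m -> 0 < q -> 0 < b ->
  m * m <= exp (4 / (q*q*b) + b * Rpower m q).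
Proof.
  intros Hm Hq Hb.
  set (y := Rpower m (q/2)).
  assert (Hy : 0 < y) by (unfold y, Rpower; apply exp_pos).
  assert (Hyy : y * y = Rpower m q).
  { unfold y. rewrite <- Rpower_plus. f_equal. field. }
  assert (Hly : ln y = q/2 * ln m) by (unfold y, Rpower; apply ln_exp).
  pose proof (ln_le_id y Hy).
  assert (E : m * m = exp (2 * ln m)).
  { replace (2 * ln m) with (ln m + ln m) by ring. rewrite exp_plus, exp_ln; auto. }
  rewrite E. apply exp_le_exp. rewrite <- Hyy.
  assert (2 * ln m = 4 / q * ln y) by (rewrite Hly; field; lra).
  rewrite H0.
  assert (4 / q * ln y <= 4 / q * y).
  { apply Rmult_le_compat_l. apply Rlt_le, Rdiv_lt_0_compat; lra. lra. }
  assert (0 <= b * (y - 2/(q*b)) * (y - 2/(q*b))).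
  { rewrite Rmult_assoc. apply Rmult_le_pos. lra. apply Rle_0_sqr. }
  assert (b * (y - 2/(q*b)) * (y - 2/(q*b)) = 4 / (q*q*b) + b * (y*y) - 4/q*y)
    by (field; lra).
  lra.
Qed.

Theorem mainTheorem1 (q s : R) (hq : 0 < q) (hs : 0 < s) :
  ex_series (fun n : nat => exp (- s * nq q n)).
Proof.
  apply (ex_series_incr_n _ 2).
  set (b := s / 2 * Rpower (q/2) q).
  assert (Hb : 0 < b). { unfold b, Rpower. pose proof (exp_pos (q * ln (q/2))). nra. }
  set (K := 4 / (q*q*b)).
  apply (@ex_series_le R_AbsRing R_CompleteNormedModule _ (fun k => scal (2 * exp K) (tel k))).
  2:{ apply (@ex_series_scal_l R_AbsRing R_NormedModule), tel_ex. }
  intros k. change (2 + k)%nat with (S (S k)).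
  unfold norm; simpl; unfold abs; simpl.
  rewrite Rabs_pos_eq by (left; apply exp_pos).
  unfold scal; simpl; unfold mult; simpl.
  set (m := INR (S k)).
  assert (Hm1 : 1 <= m) by (unfold m; rewrite S_INR; pose proof (pos_INR k); lra).
  set (Y := Rpower m q).
  assert (HY : 0 < Y) by (unfold Y, Rpower; apply exp_pos).
  assert (H1 : exp (- s * nq q (S (S k))) <= exp (- (b * Y))).
  { apply exp_le_exp. pose proof (nq_bound q k hq).
    replace (INR (S k) * q / 2) with (m * (q/2)) in H by (unfold m; field).
    rewrite <- Rpower_mult_distr in H by lra.
    fold Y in H. unfold b.
    assert (s * (Y * Rpower (q / 2) q / 2) <= s * nq q (S (S k))) by (apply Rmult_le_compat_l; lra).
    lra. }
  eapply Rle_trans; [exact H1|].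
  pose proof (sq_bound m q b ltac:(lra) hq Hb) as H2. fold Y K in H2.
  rewrite exp_plus in H2. rewrite exp_Ropp.
  unfold tel. fold m. rewrite (S_INR (S k)). fold m.
  replace (/ m - / (m + 1)) with (/ (m * (m+1))) by (field; lra).
  pose proof (exp_pos (b*Y)). pose proof (exp_pos K).
  apply (Rmult_le_reg_r (exp (b*Y) * (m * (m+1)))). nra.
  replace (/ exp (b * Y) * (exp (b * Y) * (m * (m + 1)))) with (m * (m+1)) by (field; lra).
  replace (2 * exp K * / (m * (m + 1)) * (exp (b * Y) * (m * (m + 1))))
    with (2 * (exp K * exp (b * Y))) by (field; lra).
  nra.
Qed.
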